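(* Let $1\le k<n$. An $(n,n-k,n)_q$ code of size $n/k$ exists if and only if $k$ divides $n$ and $q\ge n/k$. In particular, when $k\mid n$, $q''_0(1,k,n)=n/k$.
   Context: $\mathbb{Z}_q=\{0,\dots,q-1\}$ (an alphabet); $\mathrm{wt}$ = number of nonzero coordinates; $d$ = Hamming distance; $J_q(n,w)$ = weight-$w$ words of $\mathbb{Z}_q^n$. An $(n,w,d)_q$ code of size $M$ is a subset $C\subseteq J_q(n,w)$ with $|C|=M$ and pairwise distances at least $d$. A Steiner system $S(t,k,n)$ is a pair $(N,B)$, $|N|=n$, $B$ a set of $k$-subsets (blocks) with every $t$-subset in exactly one block (an $S(1,k,n)$ exists iff $k\mid n$). For $t,k,n$ such that an $S(t,k,n)$ exists, $q''_0(t,k,n)$ is the smallest $q$ for which an $(n,n-k,n-t+1)_q$ code of size $\binom{n}{t}/\binom{k}{t}$ exists. *)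

(* Defs.v *)
From mathcomp Require Import all_boot.
Set Implicit Arguments. Unset Strict Implicit. Unset Printing Implicit Defensive.

Definition word (q n : nat) := {ffun 'I_n -> 'I_q}.

Definition wt (q n : nat) (x : word q n) : nat := #|[set i | val (x i) != 0%N]|.

Definition hdist (q n : nat) (x y : word q n) : nat := #|[set i | x i != y i]|.

Definition is_code (q n w d : nat) (C : {set word q n}) : Prop :=
  (forall x, x \in C -> wt x = w) /\
  (forall x y, x \in C -> y \in C -> x != y -> d <= hdist x y).

Definition code_exists (q n w d M : nat) : Prop :=
  exists C : {set word q n}, is_code w d C /\ #|C| = M.

(* q is q''_0(t,k,n): the smallest q for which an (n, n-k, n-t+1)_q code of
   size C(n,t)/C(k,t) exists. *)
Definition is_q0pp (t k n q : nat) : Prop :=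
  code_exists q n (n - k) (n - t + 1) ('C(n, t) %/ 'C(k, t)) /\
  forall q', code_exists q' n (n - k) (n - t + 1) ('C(n, t) %/ 'C(k, t)) -> q <= q'.

(* Main.v *)
Require Import Defs.
From mathcomp Require Import all_boot.
From mathcomp Require Import zify.
Set Implicit Arguments. Unset Strict Implicit. Unset Printing Implicit Defensive.

Definition vw (m k j i : nat) := (j + m - i %/ k) %% m.

Lemma vwE m k j i : j < m -> i %/ k < m ->
  vw m k j i = if i %/ k <= j then j - i %/ k else j + m - i %/ k.
Proof.
move=> hj hb; rewrite /vw; move: (i %/ k) hb => b hb; case: leqP => h.
  have -> : j + m - b = (j - b) + m by lia.
  by rewrite modnDr modn_small //; lia.
by rewrite modn_small //; lia.
Qed.

Lemma vw_lt q m k j i : 0 < m -> m <= q -> vw m k j i < q.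
Proof. move=> h1 h2; apply: leq_trans h2; exact: ltn_pmod. Qed.

Definition mkw q n m k (H1 : 0 < m) (H2 : m <= q) (j : nat) : word q n :=
  [ffun i : 'I_n => Ordinal (vw_lt k j i H1 H2)].

Lemma card_block n k m j : 0 < k -> n = m * k -> j < m ->
  #|[set i : 'I_n | i %/ k == j]| = k.
Proof.
move=> kpos hn hj.
have lt t : t < k -> j * k + t < n.
  move=> ht; rewrite hn; have : j.+1 * k <= m * k by rewrite leq_mul2r hj orbT.
  rewrite mulSn; lia.
pose f (t : 'I_k) : 'I_n := Ordinal (lt _ (ltn_ord t)).
have finj : injective f.
  by move=> a b /(congr1 val) /= /eqP; rewrite eqn_add2l => /eqP /val_inj.
suff -> : [set i : 'I_n | i %/ k == j] = f @: setT.
  by rewrite card_imset // cardsT card_ord.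
apply/setP => i; rewrite inE; apply/idP/idP.
  move=> /eqP hi.
  have ht : i - j * k < k.
    have := ltn_pmod i kpos; have := divn_eq i k; rewrite hi; lia.
  apply/imsetP; exists (Ordinal ht); rewrite ?inE //; apply: val_inj => /=.
  have := divn_eq i k; rewrite hi; lia.
case/imsetP => t _ ->; by rewrite /= divnMDl // divn_small // addn0.
Qed.

Theorem mainTheorem15 (n k : nat) (hk1 : 1 <= k) (hkn : k < n) :
  (forall q : nat,
     (exists C : {set word q n}, is_code (n - k) n C /\ #|C| * k = n)
     <-> (k %| n /\ n %/ k <= q))
  /\ (k %| n -> is_q0pp 1 k n (n %/ k)).
Proof.
have part1 : forall q : nat,
     (exists C : {set word q n}, is_code (n - k) n C /\ #|C| * k = n)
     <-> (k %| n /\ n %/ k <= q).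
  move=> q; split.
    case=> C [[_ hd] hc]; split; first by rewrite -hc dvdn_mull.
    rewrite -hc mulnK //.
    have i0 : 'I_n by exists 0; lia.
    have inj : {in C &, injective (fun x : word q n => x i0)}.
      move=> x y hx hy hxy; apply/eqP; apply/negPn/negP => hne.
      have := hd x y hx hy hne; rewrite /hdist.
      have : [set i | x i != y i] \proper setT.
        apply/properP; split; first exact: subsetT.
        by exists i0; rewrite ?inE // hxy eqxx.
      move/proper_card; rewrite cardsT card_ord ltnNge => /negP; exact.
    have := card_in_imset inj; move=> <-.
    by have := max_card ((fun x : word q n => x i0) @: C); rewrite card_ord.
  case=> hdv hq.
  set m := n %/ k in hq *.
  have hn : n = m * k by rewrite divnK.
  have m1 : 0 < m by rewrite /m divn_gt0 //; lia.
  clearbody m.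
  pose w := fun j : 'I_m => @mkw q n m k m1 hq j.
  have key : forall (j : 'I_m) (i : 'I_n), val (w j i) = vw m k j i.
    by move=> j i; rewrite /w /mkw ffunE.
  have bl : forall i : 'I_n, i %/ k < m.
    move=> i; rewrite ltn_divLR //; rewrite -hn; exact: ltn_ord.
  have dist : forall j j' : 'I_m, j != j' -> forall i, w j i != w j' i.
    move=> j j' hne i; apply/negP => /eqP /(congr1 val); rewrite !key.
    have hb := bl i.
    rewrite !vwE ?ltn_ord //; move: (i %/ k) hb => b hb.
    have : (j : nat) != j' by [].
    have := ltn_ord j; have := ltn_ord j'.
    move: (j : nat) (j' : nat) => a c.
    case: (leqP b a); case: (leqP b c); lia.
  have winj : injective w.
    move=> a b hab; apply/eqP; apply/negPn/negP => hne.
    have i0 : 'I_n by exists 0; lia.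
    by have := dist _ _ hne i0; rewrite hab eqxx.
  exists (w @: setT); split; last by rewrite card_imset // cardsT card_ord -hn.
  split.
    move=> x /imsetP [j _ ->]; rewrite /wt.
    have -> : [set i | val (w j i) != 0] = ~: [set i : 'I_n | i %/ k == j].
      apply/setP => i; rewrite !inE key vwE ?ltn_ord ?bl //.
      have := ltn_ord j; have := bl i; move: (i %/ k) (j : nat) => b a; case: (leqP b a); lia.
    by rewrite cardsCs setCK (@card_block n k m) ?ltn_ord // card_ord.
  move=> x y /imsetP [j _ ->] /imsetP [j' _ ->] hne.
  have hj : j != j' by apply: contraNneq hne => ->.
  rewrite /hdist.
  have -> : [set i | w j i != w j' i] = setT.
    by apply/setP => i; rewrite !inE dist.
  by rewrite cardsT card_ord.
split=> // hdv.
have e1 : n - 1 + 1 = n by lia.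
rewrite /is_q0pp !bin1 e1; split.
  have [C [hC hc]] := (proj2 (part1 (n %/ k))) (conj hdv (leqnn _)).
  exists C; split => //; apply/eqP; rewrite -(eqn_pmul2r hk1) hc divnK //.
move=> q' [C [hC hc]].
have := (proj1 (part1 q')); case.
  by exists C; split => //; rewrite hc divnK.
by [].
Qed.
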